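(* Let $(X,d,f)$ be a dynamical system and $\mathcal{A}=\{\mathcal{U}_n\}_{n\in\mathbb{N}}$ a tame defining sequence of $(X,d)$, and assume that for some $n$ the partition $\mathcal{U}_n$ consists of compact sets. Then if $f$ is uniformly continuous, $f$ has the shadowing property if and only if it has the finite shadowing property.
   Context: Spaces are nonempty separable metrizable; $d$ admissible, $f$ continuous. A partition is a cover by pairwise disjoint nonempty clopen sets. A defining sequence is a sequence of partitions $\{\mathcal{U}_n\}$, each refining the previous, whose union is a basis; tame if $\sup\{\operatorname{diam}O:O\in\mathcal{U}_n\}\to0$ and each $\mathcal{U}_n$ is $\rho_n$-separated for some $\rho_n>0$ (points in distinct elements are at distance $\ge\rho_n$). A $\delta$-pseudo-orbit is a finite or infinite sequence $(x_i)$ with $d(f(x_i),x_{i+1})<\delta$; $x$ $\varepsilon$-shadows it if $d(f^i(x),x_i)<\varepsilon$ for all indices. Finite shadowing: $\forall\varepsilon>0\,\exists\delta>0$ every finite $\delta$-pseudo-orbit is $\varepsilon$-shadowed; shadowing: same for infinite pseudo-orbits. *)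

(* Defs.v *)
From Stdlib Require Import Reals List.
Open Scope R_scope.

Definition set (X : Type) := X -> Prop.

Definition is_metric {X : Type} (d : X -> X -> R) : Prop :=
  (forall x y, 0 <= d x y) /\
  (forall x y, d x y = 0 <-> x = y) /\
  (forall x y, d x y = d y x) /\
  (forall x y z, d x z <= d x y + d y z).

(* separable: there is a countable dense sequence (this also makes X nonempty) *)
Definition separable {X : Type} (d : X -> X -> R) : Prop :=
  exists s : nat -> X, forall x eps, 0 < eps -> exists n, d x (s n) < eps.

Definition ball {X : Type} (d : X -> X -> R) (x : X) (r : R) : set X :=
  fun y => d x y < r.

Definition is_open {X : Type} (d : X -> X -> R) (U : set X) : Prop :=
  forall x, U x -> exists r, 0 < r /\ forall y, ball d x r y -> U y.

Definition clopen {X : Type} (d : X -> X -> R) (U : set X) : Prop :=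
  is_open d U /\ is_open d (fun x => ~ U x).

Definition compact_set {X : Type} (d : X -> X -> R) (K : set X) : Prop :=
  forall (I : Type) (G : I -> set X),
    (forall i, is_open d (G i)) ->
    (forall x, K x -> exists i, G i x) ->
    exists l : list I, forall x, K x -> exists i, In i l /\ G i x.

Definition partition {X : Type} (d : X -> X -> R) (P : set (set X)) : Prop :=
  (forall U, P U -> (exists x, U x) /\ clopen d U) /\
  (forall x, exists U, P U /\ U x) /\
  (forall U V, P U -> P V -> U <> V -> forall x, ~ (U x /\ V x)).

Definition refines {X : Type} (P Q : set (set X)) : Prop :=
  forall V, P V -> exists U, Q U /\ forall x, V x -> U x.

Definition is_basis_union {X : Type} (d : X -> X -> R) (A : nat -> set (set X)) : Prop :=
  forall O x, is_open d O -> O x ->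
    exists n U, A n U /\ U x /\ forall y, U y -> O y.

Definition defining_sequence {X : Type} (d : X -> X -> R) (A : nat -> set (set X)) : Prop :=
  (forall n, partition d (A n)) /\
  (forall n, refines (A (S n)) (A n)) /\
  is_basis_union d A.

Definition mesh_to_zero {X : Type} (d : X -> X -> R) (A : nat -> set (set X)) : Prop :=
  forall eps, 0 < eps -> exists N, forall n, (N <= n)%nat ->
    forall O, A n O -> forall x y, O x -> O y -> d x y <= eps.

Definition separated {X : Type} (d : X -> X -> R) (P : set (set X)) (rho : R) : Prop :=
  forall U V, P U -> P V -> U <> V -> forall x y, U x -> V y -> rho <= d x y.

Definition tame_defining_sequence {X : Type} (d : X -> X -> R) (A : nat -> set (set X)) : Prop :=
  defining_sequence d A /\ mesh_to_zero d A /\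
  (forall n, exists rho, 0 < rho /\ separated d (A n) rho).

Definition continuous_map {X : Type} (d : X -> X -> R) (f : X -> X) : Prop :=
  forall x eps, 0 < eps -> exists delta, 0 < delta /\
    forall y, d x y < delta -> d (f x) (f y) < eps.

Definition uniformly_continuous {X : Type} (d : X -> X -> R) (f : X -> X) : Prop :=
  forall eps, 0 < eps -> exists delta, 0 < delta /\
    forall x y, d x y < delta -> d (f x) (f y) < eps.

Definition finite_pseudo_orbit {X : Type} (d : X -> X -> R) (f : X -> X)
    (delta : R) (n : nat) (xs : nat -> X) : Prop :=
  forall i, (i < n)%nat -> d (f (xs i)) (xs (S i)) < delta.

Definition finite_shadows {X : Type} (d : X -> X -> R) (f : X -> X)
    (eps : R) (n : nat) (xs : nat -> X) (z : X) : Prop :=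
  forall i, (i <= n)%nat -> d (Nat.iter i f z) (xs i) < eps.

Definition pseudo_orbit {X : Type} (d : X -> X -> R) (f : X -> X)
    (delta : R) (xs : nat -> X) : Prop :=
  forall i, d (f (xs i)) (xs (S i)) < delta.

Definition shadows {X : Type} (d : X -> X -> R) (f : X -> X)
    (eps : R) (xs : nat -> X) (z : X) : Prop :=
  forall i, d (Nat.iter i f z) (xs i) < eps.

Definition finite_shadowing {X : Type} (d : X -> X -> R) (f : X -> X) : Prop :=
  forall eps, 0 < eps -> exists delta, 0 < delta /\
    forall n xs, finite_pseudo_orbit d f delta n xs ->
      exists z, finite_shadows d f eps n xs z.

Definition shadowing {X : Type} (d : X -> X -> R) (f : X -> X) : Prop :=
  forall eps, 0 < eps -> exists delta, 0 < delta /\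
    forall xs, pseudo_orbit d f delta xs ->
      exists z, shadows d f eps xs z.

(* Main.v *)
Require Import Defs.
From Stdlib Require Import Reals.
From Stdlib Require Import Lra Lia List Classical IndefiniteDescription.
Open Scope R_scope.

Section Aux.
Context {X : Type} (d : X -> X -> R) (f : X -> X) (Hm : is_metric d).

Lemma dxx x : d x x = 0.
Proof. destruct Hm as [_ [H _]]. apply H. reflexivity. Qed.

Lemma tri x y z : d x z <= d x y + d y z.
Proof. destruct Hm as [_ [_ [_ H]]]. apply H. Qed.

Lemma dsym x y : d x y = d y x.
Proof. destruct Hm as [_ [_ [H _]]]. apply H. Qed.

Definition Gc (zs : nat -> X) (i : X * nat * R) : set X := fun y =>
  0 < snd i /\ (forall n, (snd (fst i) <= n)%nat -> snd i <= d (fst (fst i)) (zs n))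
  /\ d (fst (fst i)) y < snd i.

Fixpoint maxN (l : list (X * nat * R)) : nat :=
  match l with nil => 0%nat | i :: l' => Nat.max (snd (fst i)) (maxN l') end.

Lemma maxN_in l i : In i l -> (snd (fst i) <= maxN l)%nat.
Proof.
  induction l as [|a l IH]; simpl; [tauto|].
  intros [<-|H]; [lia|]. specialize (IH H). lia.
Qed.

Lemma cluster (K : set X) (zs : nat -> X) :
  compact_set d K -> (forall n, K (zs n)) ->
  exists z, forall r N, 0 < r -> exists n, (N <= n)%nat /\ d z (zs n) < r.
Proof.
  intros HK Hz. apply NNPP; intro H.
  assert (Hc : forall x, K x -> exists i, Gc zs i x).
  { intros x _. pose proof (not_ex_all_not _ _ H x) as H1.
    apply not_all_ex_not in H1 as [r H1].
    apply not_all_ex_not in H1 as [N H1].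
    apply imply_to_and in H1 as [Hr H1].
    exists (x, N, r). unfold Gc; simpl. split; [lra|split].
    - intros n Hn. apply Rnot_lt_le. intro Hlt. apply H1. exists n. auto.
    - rewrite dxx. lra. }
  assert (Ho : forall i, is_open d (Gc zs i)).
  { intros i x [Hr [HN Hd]]. exists (snd i - d (fst (fst i)) x). split; [lra|].
    intros y Hy. unfold ball in Hy. split; [lra|split; [auto|]].
    pose proof (tri (fst (fst i)) x y). lra. }
  destruct (HK _ (Gc zs) Ho Hc) as [l Hl].
  destruct (Hl (zs (maxN l)) (Hz _)) as [i [Hi [Hr [HN Hd]]]].
  specialize (HN _ (maxN_in l i Hi)). lra.
Qed.

Lemma iter_cont : continuous_map d f -> forall i z eta, 0 < eta -> exists delta, 0 < delta /\
  forall y, d z y < delta -> d (Nat.iter i f z) (Nat.iter i f y) < eta.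
Proof.
  intros Hc. induction i as [|i IH]; intros z eta He.
  - exists eta. split; auto.
  - destruct (Hc (Nat.iter i f z) eta He) as [d1 [Hd1 H1]].
    destruct (IH z d1 Hd1) as [d2 [Hd2 H2]].
    exists d2. split; auto. intros y Hy. simpl. apply H1. auto.
Qed.

End Aux.

Theorem proposition4p19 (X : Type) (d : X -> X -> R) (f : X -> X)
  (A : nat -> set (set X)) :
  is_metric d -> separable d -> continuous_map d f ->
  tame_defining_sequence d A ->
  (exists n, forall U, A n U -> compact_set d U) ->
  uniformly_continuous d f ->
  (shadowing d f <-> finite_shadowing d f).
Proof.
  intros Hm _ Hc [[Hpart _] [_ Hsep]] [m Hcomp] _.
  split.
  - intros Hsh eps Heps. destruct (Hsh eps Heps) as [delta [Hd H]].
    exists delta. split; auto. intros n xs Hpo.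
    set (ys := fun i => if Nat.leb i n then xs i else Nat.iter (i - n) f (xs n)).
    assert (Hy1 : forall i, (i <= n)%nat -> ys i = xs i).
    { intros i Hi. unfold ys. apply Nat.leb_le in Hi. rewrite Hi. auto. }
    assert (Hy2 : forall i, (n <= i)%nat -> ys i = Nat.iter (i - n) f (xs n)).
    { intros i Hi. unfold ys. destruct (Nat.leb i n) eqn:E; auto.
      apply Nat.leb_le in E. assert (i = n) by lia. subst.
      rewrite Nat.sub_diag. reflexivity. }
    destruct (H ys) as [z Hz].
    + intros i. destruct (Nat.lt_ge_cases i n) as [Hi|Hi].
      * rewrite (Hy1 i) by lia. rewrite (Hy1 (S i)) by lia. apply Hpo; auto.
      * rewrite (Hy2 i) by lia. rewrite (Hy2 (S i)) by lia.
        replace (S i - n)%nat with (S (i - n)) by lia. simpl.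
        rewrite (dxx d Hm). auto.
    + exists z. intros i Hi. rewrite <- (Hy1 i Hi). apply Hz.
  - intros Hfs eps Heps.
    destruct (Hsep m) as [rho [Hrho Hs]].
    set (e' := Rmin (eps / 2) (rho / 2)).
    assert (He1 : 0 < e') by (unfold e'; apply Rmin_glb_lt; lra).
    assert (He2 : e' < eps) by (unfold e'; pose proof (Rmin_l (eps/2) (rho/2)); lra).
    assert (He3 : e' < rho) by (unfold e'; pose proof (Rmin_r (eps/2) (rho/2)); lra).
    destruct (Hfs e' He1) as [delta [Hd H]].
    exists delta. split; auto. intros xs Hpo.
    assert (Hex : forall n, exists z, finite_shadows d f e' n xs z).
    { intros n. apply H. intros i _. apply Hpo. }
    destruct (functional_choice _ Hex) as [zs Hzs].
    destruct (Hpart m) as [_ [Hcov Hdis]].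
    destruct (Hcov (xs 0%nat)) as [U [HU Ux]].
    assert (HzU : forall n, U (zs n)).
    { intros n. destruct (Hcov (zs n)) as [V [HV Vz]].
      destruct (classic (V = U)) as [<-|Hne]; auto.
      exfalso. specialize (Hs _ _ HV HU Hne _ _ Vz Ux).
      specialize (Hzs n 0%nat (Nat.le_0_l _)). simpl in Hzs.
      lra. }
    destruct (@cluster X d f Hm U zs (Hcomp U HU) HzU) as [z Hz].
    exists z. intros i.
    cut (d (Nat.iter i f z) (xs i) <= e'); [lra|].
    apply Rnot_lt_le. intro Hlt.
    destruct (iter_cont d f Hc i z (d (Nat.iter i f z) (xs i) - e')) as [dl [Hdl Hi]]; [lra|].
    destruct (Hz dl i Hdl) as [n [Hn Hdn]].
    specialize (Hi _ Hdn). specialize (Hzs n i Hn).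
    pose proof (tri d Hm (Nat.iter i f z) (Nat.iter i f (zs n)) (xs i)). lra.
Qed.
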